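(* Let $K\in\mathbb{N}$, $\mathbf{A}=(A_1,\dots,A_K)$ with $A_k>0$, and $[\mathbf{0},\mathbf{A}]=\{\mathbf{x}\in\mathbb{R}^K:0\le x_k\le A_k,\ k=1,\dots,K\}$. Let $f\colon[\mathbf{0},\mathbf{A}]\to\mathbb{R}$ be $L$-Lipschitz continuous with respect to the $\ell_1$-norm and assume $f(\mathbf{y})=0$ for some $\mathbf{y}\in[\mathbf{0},\mathbf{A}]$. Then \[ \int_{[\mathbf{0},\mathbf{A}]}|f(\mathbf{x})|\,\lambda^K(\mathrm{d}\mathbf{x})\le\frac L2\Big(\prod_{k=1}^K A_k\Big)\Big(\sum_{k=1}^K A_k\Big). \] In particular, if $A_k=\varepsilon$ for all $k$, then $\int_{[0,\varepsilon]^K}|f(\mathbf{x})|\,\lambda^K(\mathrm{d}\mathbf{x})\le\varepsilon^{K+1}\frac{LK}{2}$.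
   Context: $\lambda^K$ is Lebesgue measure on $\mathbb{R}^K$; Lipschitz continuity is $|f(\mathbf{x})-f(\mathbf{x}')|\le L\|\mathbf{x}-\mathbf{x}'\|_1$. *)

(* Defs.v *)
From HB Require Import structures.
From mathcomp Require Import all_boot all_order all_algebra.
From mathcomp Require Import all_classical all_reals all_analysis.
Set Implicit Arguments. Unset Strict Implicit. Unset Printing Implicit Defensive.
Import Order.TTheory GRing.Theory Num.Theory.
Local Open Scope classical_set_scope.
Local Open Scope ring_scope.

(* The K-dimensional Lebesgue measure lambda^K on R^K, with R^K represented
   as K.-tuple R (equipped by the library with the product sigma-algebra
   generated by the coordinate projections). *)
Fixpoint lebesgueK (R : realType) (n : nat) : set (n.-tuple R) -> \bar R :=
  match n with
  | 0 => fun A => @dirac _ (0.-tuple R) [tuple] R A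
  | n'.+1 => fun A =>
      ((@lebesgue_measure R) \x (@lebesgueK R n'))%E
        ((fun p : R * n'.-tuple R => [tuple of p.1 :: p.2]) @^-1` A)
  end.

Definition box (R : realType) (K : nat) (A : K.-tuple R) : set (K.-tuple R) :=
  [set x | forall k : 'I_K, 0 <= tnth x k <= tnth A k].

Definition l1dist (R : realType) (K : nat) (x y : K.-tuple R) : R :=
  \sum_(k < K) `|tnth x k - tnth y k|.

Definition lipschitz_l1_on (R : realType) (K : nat) (D : set (K.-tuple R))
    (f : K.-tuple R -> R) (L : R) : Prop :=
  forall x x', D x -> D x' -> `|f x - f x'| <= L * l1dist x x'.

(* Main.v *)
Require Import Defs.
From HB Require Import structures.
From mathcomp Require Import all_boot all_order all_algebra.
From mathcomp Require Import all_classical all_reals all_analysis.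
From mathcomp Require Import measurable_realfun ring lra.
Set Implicit Arguments. Unset Strict Implicit. Unset Printing Implicit Defensive.
Import Order.TTheory GRing.Theory Num.Theory numFieldNormedType.Exports.
Local Open Scope classical_set_scope.
Local Open Scope ring_scope.

Section nxt.
Local Open Scope ereal_scope.
Variables (R : realType) (n : nat) (m : {sigma_finite_measure set (n.-tuple R) -> \bar R}).
Definition consf (p : R * n.-tuple R) : n.+1.-tuple R := [tuple of p.1 :: p.2].
Lemma measurable_consf : measurable_fun setT consf.
Proof. exact: measurable_cons. Qed.
Definition nxt := pushforward ((@lebesgue_measure R) \x m)%E consf.

Let nxt0 : nxt set0 = 0.
Proof. by rewrite /nxt /pushforward preimage_set0 measure0. Qed.
Let nxt_ge0 A : 0 <= nxt A.
Proof. rewrite /nxt /pushforward; exact: measure_ge0. Qed.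
Let nxt_sigma_additive : semi_sigma_additive nxt.
Proof.
move=> F mF tF mUF; rewrite /nxt /pushforward preimage_bigcup.
apply: measure_semi_sigma_additive.
- by move=> k; rewrite -[X in measurable X]setTI; exact: measurable_consf.
- apply/trivIsetP => /= i j _ _ ij; rewrite -preimage_setI.
  by move/trivIsetP : tF => /(_ _ _ _ _ ij) ->//; rewrite preimage_set0.
- by rewrite -preimage_bigcup -[X in measurable X]setTI; exact: measurable_consf.
Qed.
HB.instance Definition _ := isMeasure.Build _ _ _ nxt nxt0 nxt_ge0 nxt_sigma_additive.

Let nxt_sigma_finite : sigma_finite setT nxt.
Proof.
have /sigma_finiteP[F [FT Fnd Fm]] := sigma_finiteT (@lebesgue_measure R).
have /sigma_finiteP[G [GT Gnd Gm]] := sigma_finiteT m.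
exists (fun i => [set x : n.+1.-tuple R | F i (thead x) /\ G i [tuple of behead x]]).
- apply/seteqP; split=> // x _.
  have [i _ Fi] : (\bigcup_i F i) (thead x) by rewrite -FT.
  have [j _ Gj] : (\bigcup_i G i) [tuple of behead x] by rewrite -GT.
  exists (maxn i j) => //; split.
    by have := Fnd i _ (leq_maxl i j); move/subsetPset; apply.
  by have := Gnd j _ (leq_maxr i j); move/subsetPset; apply.
move=> i; split.
  have -> : [set x : n.+1.-tuple R | F i (thead x) /\ G i [tuple of behead x]] =
    ((fun x : n.+1.-tuple R => thead x) @^-1` F i) `&` ((fun x : n.+1.-tuple R => [tuple of behead x]) @^-1` G i) by [].
  apply: measurableI.
    rewrite -[X in measurable X]setTI.
    by apply: (@measurable_tnth _ R n.+1 ord0) => //; exact: (Fm i).1.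
  rewrite -[X in measurable X]setTI.
  by apply: measurable_behead => //; exact: (Gm i).1.
rewrite /nxt /pushforward.
rewrite [X in (_ \x _) X](_ : _ = F i `*` G i); last first.
  apply/seteqP; split => [[a t]|[a t]] /=; rewrite /consf /=.
    by move=> [? H]; split => //; move: H; congr (G i _); apply: val_inj.
  by move=> [? H]; split => //; move: H; congr (G i _); apply: val_inj.
rewrite product_measure1E; [|exact: (Fm i).1|exact: (Gm i).1].
apply: lte_mul_pinfty; [exact: measure_ge0| |exact: (Gm i).2].
by rewrite ge0_fin_numE ?measure_ge0//; exact: (Fm i).2.
Qed.
HB.instance Definition _ := Measure_isSigmaFinite.Build _ _ _ nxt nxt_sigma_finite.
End nxt.

Fixpoint LK (R : realType) (n : nat) : {sigma_finite_measure set (n.-tuple R) -> \bar R} :=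
  match n with
  | 0 => [the {sigma_finite_measure set (0.-tuple R) -> \bar R} of @dirac _ (0.-tuple R) [tuple] R]
  | n'.+1 => [the {sigma_finite_measure set (n'.+1.-tuple R) -> \bar R} of nxt (LK R n')]
  end.

Lemma LKE (R : realType) n A : LK R n A = @lebesgueK R n A.
Proof.
elim: n A => [//|n IH] A /=.
rewrite /nxt /pushforward /product_measure1.
congr (integral _ _ _); apply: funext => x /=.
exact: IH.
Qed.
Lemma polyF_derive (R : realType) (p q : R) (x : R) :
  is_derive x (1:R) (fun t : R => p * t + q * t ^+ 2) (p + q * (2 * x)).
Proof.
apply: is_derive_eq.
by rewrite /GRing.scale/= !mulr1 mulr2n mulrDl mul1r.
Qed.

Lemma polyF_cont (R : realType) (p q : R) (x : R) : {for x, continuous (fun t : R => p * t + q * t ^+ 2)}.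
Proof.
apply/differentiable_continuous; rewrite -derivable1_diffP.
exact: (@ex_derive _ _ _ _ _ _ _ (polyF_derive p q x)).
Qed.

Lemma polyh_cont (R : realType) (p q : R) (x : R) : {for x, continuous (fun t : R => p + q * (2 * t))}.
Proof.
apply/differentiable_continuous; rewrite -derivable1_diffP.
have : is_derive x (1:R) (fun t : R => p + q * (2 * t)) (q * 2).
  by apply: is_derive_eq; rewrite /GRing.scale/= add0r mul1r mulr1.
by move=> H; exact: (@ex_derive _ _ _ _ _ _ _ H).
Qed.

Lemma int1 (R : realType) (a y : R) : 0 < a -> 0 <= y <= a ->
  (\int[lebesgue_measure]_(t in `[0%R, a]) (`|t - y|)%:E <= (a ^+ 2 / 2)%:E)%E.
Proof.
move=> a0 /andP[y0 ya].
pose q := (a - 2 * y) / (2 * a).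
pose h t := y + q * (2 * t).
pose F t := y * t + q * t ^+ 2.
apply: (@le_trans _ _ (\int[lebesgue_measure]_(t in `[0%R, a]) (h t)%:E)%E).
  apply: ge0_le_integral => //.
  - apply/measurable_EFinP; apply: measurableT_comp => //.
    by apply: measurable_funB => //.
  - apply/measurable_EFinP.
    apply: measurable_funTS; apply: continuous_measurable_fun => x; exact: polyh_cont.
  - move=> t; rewrite /= in_itv /= => /andP[t0 ta]; rewrite lee_fin.
    have ha : h t = (a * y + (a - 2 * y) * t) / a.
      rewrite /h /q; field; by rewrite gt_eqF.
    rewrite ha ler_pdivlMr //.
    have [ty|ty] := lerP y t.
      nra.
    nra.
rewrite (@continuous_FTC2 _ _ F) //.
- rewrite -EFinB lee_fin (_ : F a - F 0 = a ^+ 2 / 2) //; rewrite /F /q; field; by rewrite gt_eqF.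
- by apply: continuous_subspaceT; exact: polyh_cont.
- split.
  + by move=> x _; exact: (@ex_derive _ _ _ _ _ _ _ (polyF_derive y q x)).
  + by apply: cvg_at_right_filter; exact: polyF_cont.
  + by apply: cvg_at_left_filter; exact: polyF_cont.
- move=> x _; rewrite derive1E.
  exact: (@derive_val _ _ _ _ _ _ _ (polyF_derive y q x)).
Qed.
Section rect.
Local Open Scope ereal_scope.
Context d1 d2 (T1 : measurableType d1) (T2 : measurableType d2) (R : realType).
Variables (m1 : {sigma_finite_measure set T1 -> \bar R}) (m2 : {sigma_finite_measure set T2 -> \bar R}).
Variables (I : set T1) (B : set T2) (mI : measurable I) (mB : measurable B).

Lemma fubini_rect1 (h : T1 -> \bar R) : measurable_fun setT h -> (forall x, 0 <= h x) ->
  \int[m1 \x m2]_(p in I `*` B) h p.1 = \int[m1]_(x in I) (h x * m2 B).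
Proof.
move=> mh h0.
rewrite integral_mkcond fubini_tonelli1; last 2 first.
- apply/(measurable_restrictT _ _).1; first exact: measurableX.
  by apply: measurable_funTS; exact: measurableT_comp.
- by move=> p; apply: erestrict_ge0 => q _; exact: h0.
rewrite (integral_mkcond I); congr integral; apply/funext => x.
rewrite /fubini_F /= patchE.
case: ifPn => xI.
  rewrite -(integral_cst m2 mB); rewrite [RHS]integral_mkcond.
  congr integral; apply/funext => y; rewrite !patchE.
  have -> : ((x, y) \in I `*` B) = (y \in B).
    by apply/idP/idP => [/set_mem [_ /mem_set] //|/set_mem yB]; apply/mem_set; split => //; exact/set_mem.
  by [].
rewrite -[RHS](integral0 m2 setT); congr integral; apply/funext => y.
rewrite patchE ifF //; apply/negbTE; apply: contra xI => /set_mem [? _]; exact/mem_set.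
Qed.

Lemma fubini_rect2 (h : T2 -> \bar R) : measurable_fun setT h -> (forall x, 0 <= h x) ->
  \int[m1 \x m2]_(p in I `*` B) h p.2 = (\int[m2]_(y in B) h y) * m1 I.
Proof.
move=> mh h0.
rewrite integral_mkcond fubini_tonelli1; last 2 first.
- apply/(measurable_restrictT _ _).1; first exact: measurableX.
  by apply: measurable_funTS; exact: measurableT_comp.
- by move=> p; apply: erestrict_ge0 => q _; exact: h0.
rewrite -(integral_cst m1 mI) [RHS]integral_mkcond; congr integral; apply/funext => x.
rewrite /fubini_F /= patchE.
case: ifPn => xI.
  rewrite [RHS]integral_mkcond.
  congr integral; apply/funext => y; rewrite !patchE.
  have -> : ((x, y) \in I `*` B) = (y \in B).
    by apply/idP/idP => [/set_mem [_ /mem_set] //|/set_mem yB]; apply/mem_set; split => //; exact/set_mem.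
  by [].
rewrite -[RHS](integral0 m2 setT); congr integral; apply/funext => y.
rewrite patchE ifF //; apply/negbTE; apply: contra xI => /set_mem [? _]; exact/mem_set.
Qed.
End rect.

Section boxes.
Variable R : realType.

Lemma box_consE n (a t : R) (A x : n.-tuple R) :
  box [tuple of a :: A] [tuple of t :: x] <-> (0 <= t <= a /\ box A x).
Proof.
split.
  move=> H; split; first exact: (H ord0).
  by move=> k; have := H (lift ord0 k); rewrite !tnthS.
move=> [ta Hx] k; case: (unliftP ord0 k) => [j ->|->] //.
by rewrite !tnthS; exact: Hx.
Qed.

Lemma box_cons n (a : R) (A : n.-tuple R) :
  (@consf R n) @^-1` box [tuple of a :: A] = `[0, a]%classic `*` box A.
Proof.
apply/seteqP; split => [[t x]|[t x]] /=; rewrite /consf /= box_consE /= in_itv /=; by [].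
Qed.

Lemma box_measurable n (A : n.-tuple R) : measurable (box A).
Proof.
elim: n A => [|n IH] A.
  by rewrite (_ : box A = setT) //; apply/seteqP; split => // x _ [] [].
case/tupleP: A => a A.
have -> : box [tuple of a :: A] = ((fun x : n.+1.-tuple R => thead x) @^-1` `[0, a]%classic) `&`
    ((fun x : n.+1.-tuple R => [tuple of behead x]) @^-1` box A).
  apply/seteqP; split => x; case/tupleP: x => t x /=; rewrite box_consE /= in_itv /=;
    by rewrite (_ : [tuple of behead [tuple of t :: x]] = x) //; apply: val_inj.
apply: measurableI.
  rewrite -[X in measurable X]setTI.
  by apply: (@measurable_tnth _ R n.+1 ord0) => //.
rewrite -[X in measurable X]setTI.
exact: measurable_behead.
Qed.

Lemma l1dist_cons n (t y0 : R) (x y : n.-tuple R) :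
  l1dist [tuple of t :: x] [tuple of y0 :: y] = `|t - y0| + l1dist x y.
Proof.
by rewrite /l1dist big_ord_recl /=; congr (_ + _); apply: eq_bigr => i _; rewrite !tnthS.
Qed.

Lemma measurable_l1dist n (y : n.-tuple R) : measurable_fun setT (fun x : n.-tuple R => l1dist x y).
Proof.
apply: measurable_sum => k.
apply: measurableT_comp => //.
apply: measurable_funB => //; exact: measurable_tnth.
Qed.

Lemma l1dist_ge0 n (x y : n.-tuple R) : 0 <= l1dist x y.
Proof. by apply: sumr_ge0 => i _. Qed.

End boxes.

Lemma le_of_eq (R : realType) (u v : R) : u = v -> u <= v.
Proof. by move=> ->. Qed.

Lemma main_ind (R : realType) n (A y : n.-tuple R) : (forall k, 0 < tnth A k) -> box A y ->
  LK R n (box A) = (\prod_(k < n) tnth A k)%:E /\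
  (\int[LK R n]_(x in box A) (l1dist x y)%:E <=
     ((\prod_(k < n) tnth A k) * (\sum_(k < n) tnth A k) / 2)%:E)%E.
Proof.
elim: n A y => [|n IH] A y A0 yA.
  have bT : box A = setT by apply/seteqP; split => // x _ [] [].
  rewrite bT /= diracT big_ord0; split => //.
  rewrite big_ord0 mul1r mul0r.
  rewrite (_ : (fun x => _) = cst 0%E); first by rewrite integral0.
  by apply/funext => x; rewrite /l1dist big_ord0.
move: A0 yA; case/tupleP: A => a A; case/tupleP: y => y0 y => A0 yA.
have a0 : 0 < a by exact: (A0 ord0).
have A0' : forall k, 0 < tnth A k by move=> k; have := A0 (lift ord0 k); rewrite tnthS.
move/box_consE: yA => [y0a yA].
have [IH1 IH2] := IH A y A0' yA.
have prodE : \prod_(k < n.+1) tnth [tuple of a :: A] k = a * \prod_(k < n) tnth A k.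
  by rewrite big_ord_recl /=; congr (_ * _); apply: eq_bigr => i _; rewrite tnthS.
have sumE : \sum_(k < n.+1) tnth [tuple of a :: A] k = a + \sum_(k < n) tnth A k.
  by rewrite big_ord_recl /=; congr (_ + _); apply: eq_bigr => i _; rewrite tnthS.
have lam : lebesgue_measure (`[0, a]%classic : set R) = a%:E.
  by rewrite lebesgue_measure_itv /= lte_fin a0 -EFinB subr0.
have mI : measurable (`[0, a]%classic : set R) by exact: measurable_itv.
rewrite prodE sumE; split.
  rewrite /= /nxt /pushforward box_cons product_measure1E //; last exact: box_measurable.
  by rewrite IH1 EFinM; congr (_ * _)%E; exact: lam.
have -> : (\int[LK R n.+1]_(x in box [tuple of a :: A]) (l1dist x [tuple of y0 :: y])%:E =
  \int[pushforward ((@lebesgue_measure R) \x LK R n)%E (@consf R n)]_(x in box [tuple of a :: A])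
     (l1dist x [tuple of y0 :: y])%:E)%E by [].
rewrite ge0_integral_pushforward //; last 4 first.
- exact: measurable_consf.
- exact: box_measurable.
- by apply/measurable_EFinP; apply: measurable_funTS; exact: measurable_l1dist.
- by move=> x _; rewrite lee_fin l1dist_ge0.
rewrite box_cons.
under eq_integral do rewrite /= /consf l1dist_cons EFinD.
rewrite ge0_integralD //; last 4 first.
- by apply: measurableX => //; exact: box_measurable.
- apply/measurable_EFinP; apply: measurable_funTS.
  apply: (@measurableT_comp _ _ _ _ _ _ (fun t : R => `|t - y0|) _ fst) => //.
  by apply: measurableT_comp => //; apply: measurable_funB.
- by move=> p _; rewrite lee_fin l1dist_ge0.
- apply/measurable_EFinP; apply: measurable_funTS.
  apply: (@measurableT_comp _ _ _ _ _ _ (fun x => l1dist x y) _ snd) => //.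
  exact: measurable_l1dist.
have E1 := fubini_rect1 (@lebesgue_measure R) (LK R n) mI (box_measurable A) (h := fun t : R => (`|t - y0|)%:E).
rewrite /= in E1; rewrite E1; last 2 first.
- apply/measurable_EFinP.
  by apply: measurableT_comp => //; apply: measurable_funB.
- by move=> t; rewrite lee_fin.
have E2 := fubini_rect2 (@lebesgue_measure R) (LK R n) mI (box_measurable A) (h := fun x => (l1dist x y)%:E).
rewrite /= in E2; rewrite E2; last 2 first.
- by apply/measurable_EFinP; exact: measurable_l1dist.
- by move=> x; rewrite lee_fin l1dist_ge0.
rewrite IH1 ge0_integralZr //; last 2 first.
- apply/measurable_EFinP; apply: measurable_funTS.
  by apply: measurableT_comp => //; apply: measurable_funB.
- by rewrite lee_fin; apply: prodr_ge0 => k _; apply: ltW.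
have lam' : lebesgue_measure_lebesgue_measure__canonical__measure_function_Measure R `[0%R, a]%classic = a%:E by exact: lam.
rewrite [X in (_ + _ * X)%E]lam'.
apply: le_trans (leeD (lee_wpmul2r _ (int1 a0 y0a)) (lee_wpmul2r _ IH2)) _.
- by rewrite lee_fin; apply: prodr_ge0 => k _; apply: ltW.
- by rewrite lee_fin ltW.
by rewrite -!EFinM -EFinD lee_fin; apply: le_of_eq; field.
Qed.

Lemma le_integral_nm d (T : measurableType d) (R : realType) (mu : set T -> \bar R)
  (D : set T) (f1 f2 : T -> \bar R) :
  (forall x, D x -> 0 <= f1 x)%E -> (forall x, D x -> f1 x <= f2 x)%E ->
  (\int[mu]_(x in D) f1 x <= \int[mu]_(x in D) f2 x)%E.
Proof.
move=> f10 f12; rewrite /integral.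
have N1 : ((f1 \_ D)^\-)%E = cst 0%E.
  apply/funext => x; rewrite funenegE patchE; case: ifPn => [/set_mem xD|_].
    by apply/max_idPr; rewrite leeNl oppe0 f10.
  by rewrite oppe0 maxxx.
have N2 : ((f2 \_ D)^\-)%E = cst 0%E.
  apply/funext => x; rewrite funenegE patchE; case: ifPn => [/set_mem xD|_].
    by apply/max_idPr; rewrite leeNl oppe0 (le_trans (f10 _ xD) (f12 _ xD)).
  by rewrite oppe0 maxxx.
rewrite N1 N2; apply: leeD => //.
apply: ereal_sup_le => _ [h hle <-]; exists h => //= x.
apply: le_trans (hle x) _; rewrite !funeposE !patchE; case: ifPn => [/set_mem xD|//].
rewrite (max_idPl (f10 _ xD)) (max_idPl (le_trans (f10 _ xD) (f12 _ xD))).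
exact: f12.
Qed.

Lemma term_le_l1 (R : realType) n (x y : n.-tuple R) k : `|tnth x k - tnth y k| <= l1dist x y.
Proof. by rewrite /l1dist (bigD1 k) //= lerDl; apply: sumr_ge0. Qed.

Lemma part1 (R : realType) (K : nat) (A : K.-tuple R) (f : K.-tuple R -> R) (L : R) (y : K.-tuple R) :
      (forall k : 'I_K, 0 < tnth A k) ->
      lipschitz_l1_on (box A) f L ->
      box A y -> f y = 0 ->
      (\int[@lebesgueK R K]_(x in box A) (`|f x|)%:E <=
         (L / 2 * (\prod_(k < K) tnth A k) * (\sum_(k < K) tnth A k))%:E)%E.
Proof.
move=> A0 Lf yA fy0.
have E : @lebesgueK R K = (LK R K : set _ -> _) by apply/funext => B; rewrite LKE.
rewrite E.
have [_ main2] := main_ind A0 yA.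
have bnd x : box A x -> `|f x| <= L * l1dist x y.
  by move=> xA; have := Lf x y xA yA; rewrite fy0 subr0.
have P0 : 0 <= \prod_(k < K) tnth A k by apply: prodr_ge0 => k _; exact: ltW.
have [L0|L0] := leP 0 L.
  have H1 : (\int[LK R K]_(x in box A) (`|f x|)%:E <= \int[LK R K]_(x in box A) (L * l1dist x y)%:E)%E.
    apply: le_integral_nm.
    - by move=> x _; rewrite lee_fin.
    - by move=> x xA; rewrite lee_fin bnd.
  apply: le_trans H1 _.
  under eq_integral do rewrite EFinM.
  rewrite (ge0_integralZl_EFin _ (box_measurable A)) //; last 2 first.
  - by move=> x _; rewrite lee_fin l1dist_ge0.
  - by apply/measurable_EFinP; apply: measurable_funTS; exact: measurable_l1dist.
  apply: le_trans (lee_wpmul2l _ main2) _; first by rewrite lee_fin.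
  by rewrite -EFinM lee_fin; apply: le_of_eq; field.
have g0 x : box A x -> l1dist x y = 0.
  move=> xA; have := bnd x xA; have := l1dist_ge0 x y; have := normr_ge0 (f x); nra.
have H1 : (\int[LK R K]_(x in box A) (`|f x|)%:E <= \int[LK R K]_(x in box A) (cst 0%E) x)%E.
  apply: le_integral_nm.
  - by move=> x _; rewrite lee_fin.
  - by move=> x xA; rewrite /= lee_fin; have := bnd x xA; rewrite (g0 x xA) mulr0.
apply: le_trans H1 _.
rewrite (integral0 (LK R K) (box A)) lee_fin.
case: K A f y A0 Lf yA fy0 E main2 bnd P0 g0 => [|K] A f y A0 Lf yA fy0 E main2 bnd P0 g0.
  by rewrite !big_ord0 mulr0.
exfalso.
have hA : box A A by move=> k; rewrite lexx andbT ltW.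
pose z := [tuple of nseq K.+1 (0:R)].
have hz : box A z by move=> k; rewrite tnth_nseq lexx ltW.
have e1 := term_le_l1 A y ord0; rewrite g0 // in e1.
have e2 := term_le_l1 z y ord0; rewrite g0 // tnth_nseq in e2.
have := A0 ord0.
have : `|tnth A ord0 - tnth y ord0| = 0 by apply/eqP; rewrite eq_le e1 normr_ge0.
have : `|0 - tnth y ord0| = 0 by apply/eqP; rewrite eq_le e2 normr_ge0.
move/eqP; rewrite normr_eq0 sub0r oppr_eq0 => /eqP ->.
move/eqP; rewrite normr_eq0 subr0 => /eqP ->.
by rewrite ltxx.
Qed.

Unset Implicit Arguments.
Theorem lemma2 (R : realType) (K : nat) :
  (forall (A : K.-tuple R) (f : K.-tuple R -> R) (L : R) (y : K.-tuple R),
      (forall k : 'I_K, 0 < tnth A k) ->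
      lipschitz_l1_on (box A) f L ->
      box A y -> f y = 0 ->
      (\int[@lebesgueK R K]_(x in box A) (`|f x|)%:E <=
         (L / 2 * (\prod_(k < K) tnth A k) * (\sum_(k < K) tnth A k))%:E)%E)
  /\
  (forall (eps : R) (f : K.-tuple R -> R) (L : R) (y : K.-tuple R),
      0 < eps ->
      lipschitz_l1_on (box [tuple of nseq K eps]) f L ->
      box [tuple of nseq K eps] y -> f y = 0 ->
      (\int[@lebesgueK R K]_(x in box [tuple of nseq K eps]) (`|f x|)%:E <=
         (eps ^+ K.+1 * (L * K%:R / 2))%:E)%E).
Proof.
split; first exact: part1.
move=> eps f L y e0 Lf yA fy0.
apply: le_trans (part1 _ Lf yA fy0) _.
  by move=> k; rewrite tnth_nseq.
under eq_bigr do rewrite tnth_nseq.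
under [X in _ * X]eq_bigr do rewrite tnth_nseq.
rewrite prodr_const sumr_const card_ord lee_fin; apply: le_of_eq.
by rewrite exprS -mulr_natr; field.
Qed.
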